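(* Let $a<b$ and let $f:[a,b]\rightarrow\mathbb{R}$ be a twice continuously differentiable mapping in $(a,b)$ with $f''\in L^2[a,b]$. Assume additionally that $f(a+b-x)=f(x)$ for all $x\in[a,b]$. Then for all $x\in[a,\frac{a+b}{2}]$, \[ \left|f(x)-\frac{1}{b-a}\int_{a}^{b}f(t)\,dt\right|\leq \frac{(b-a)^{1/2}}{\pi}\left[\frac{(b-a)^2}{48}+\left(x-\frac{3a+b}{4}\right)^2\right]^{1/2}\|f''\|_2. \]
   Context: $\|g\|_2=\left(\int_a^b g(t)^2\,dt\right)^{1/2}$. *)

(* Defs.v *)
From HB Require Import structures.
From mathcomp Require Import all_boot all_order all_algebra.
From mathcomp Require Import all_classical all_reals all_analysis.
Set Implicit Arguments. Unset Strict Implicit. Unset Printing Implicit Defensive.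
Import Order.TTheory GRing.Theory Num.Theory.
Import numFieldNormedType.Exports.
Local Open Scope classical_set_scope.
Local Open Scope ring_scope.

Definition L2_on (R : realType) (a b : R) (g : R -> R) : Prop :=
  measurable_fun `[a, b] g /\
  (\int[@lebesgue_measure R]_(t in `[a, b]) ((g t) ^+ 2)%:E < +oo)%E.

Definition L2norm (R : realType) (a b : R) (g : R -> R) : R :=
  Num.sqrt (fine (\int[@lebesgue_measure R]_(t in `[a, b]) ((g t) ^+ 2)%:E)%E).

Definition mean_on (R : realType) (a b : R) (f : R -> R) : R :=
  (b - a)^-1 * Rintegral (@lebesgue_measure R) `[a, b] f.

(* Main.v *)
Require Import Defs.
From HB Require Import structures.
From mathcomp Require Import all_boot all_order all_algebra.
From mathcomp Require Import all_classical all_reals all_analysis.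
From mathcomp Require Import ring lra.
Set Implicit Arguments. Unset Strict Implicit. Unset Printing Implicit Defensive.
Import Order.TTheory GRing.Theory Num.Theory.
Import numFieldNormedType.Exports.
Local Open Scope classical_set_scope.
Local Open Scope ring_scope.

Section D.
Context {R : realType}.
Implicit Types (h : R -> R).
Lemma dM (h1 h2 : R -> R) (t d1 d2 : R) : is_derive t 1 h1 d1 -> is_derive t 1 h2 d2 ->
  is_derive t 1 (fun u => h1 u * h2 u) (h1 t * d2 + h2 t * d1).
Proof. move=> H1 H2. have := is_deriveM H1 H2. by []. Qed.
Lemma dD (h1 h2 : R -> R) (t d1 d2 : R) : is_derive t 1 h1 d1 -> is_derive t 1 h2 d2 ->
  is_derive t 1 (fun u => h1 u + h2 u) (d1 + d2).
Proof. move=> H1 H2. have := is_deriveD H1 H2. by []. Qed.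
Lemma dB (h1 h2 : R -> R) (t d1 d2 : R) : is_derive t 1 h1 d1 -> is_derive t 1 h2 d2 ->
  is_derive t 1 (fun u => h1 u - h2 u) (d1 - d2).
Proof. move=> H1 H2. have := is_deriveB H1 H2. by []. Qed.
Lemma dC (k t : R) : is_derive t 1 (fun _ : R => k) 0.
Proof. exact: is_derive_cst. Qed.
Lemma dId (t : R) : is_derive t 1 (fun u : R => u) 1.
Proof. exact: is_derive_id. Qed.
Lemma dComp (h1 h2 : R -> R) (t d1 d2 : R) : is_derive (h2 t) 1 h1 d1 -> is_derive t 1 h2 d2 ->
  is_derive t 1 (fun u => h1 (h2 u)) (d1 * d2).
Proof. move=> H1 H2. have := is_derive1_comp H1 H2. by []. Qed.
Lemma dV h (t d : R) : h t != 0 -> is_derive t 1 h d ->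
  is_derive t 1 (fun u => (h u)^-1) (- (h t)^-2 * d).
Proof. move=> H1 H2. have := is_deriveV H1 H2. by []. Qed.
Lemma dsin (t : R) : is_derive t 1 (@sin R) (cos t). Proof. exact: is_derive_sin. Qed.
Lemma dcos (t : R) : is_derive t 1 (@cos R) (- sin t). Proof. exact: is_derive_cos. Qed.
Lemma dfun h (t : R) : derivable h t 1 -> is_derive t 1 h (derive1 h t).
Proof. by move=> H; rewrite derive1E; apply: derivableP. Qed.
Lemma dval h (t d : R) : is_derive t 1 h d -> derive1 h t = d.
Proof. by move=> H; rewrite derive1E derive_val. Qed.
Lemma dmk h (t d : R) : derivable h t 1 -> derive1 h t = d -> is_derive t 1 h d.
Proof. by move=> H <-; apply: dfun. Qed.
Lemma dcont h (t d : R) : is_derive t 1 h d -> {for t, continuous h}.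
Proof.
move=> H; apply: differentiable_continuous; apply/derivable1_diffP.
by case: H.
Qed.
End D.

Lemma cs_lemma {R : realType} (I S Q : R) : 0 < S -> 0 <= Q ->
  (forall tau, 0 < tau -> 2 * `|I| <= tau * S + Q / tau) ->
  `|I| <= Num.sqrt S * Num.sqrt Q.
Proof.
move=> S0 Q0 H.
have [Qe|Qp] := eqVneq Q 0.
  rewrite Qe sqrtr0 mulr0.
  have [I0|Ip] := eqVneq `|I| 0; first by rewrite I0.
  have Ipos : 0 < `|I| by rewrite lt_def Ip normr_ge0.
  have := H (`|I| / S) (divr_gt0 Ipos S0).
  rewrite Qe mul0r addr0 divfK ?gt_eqF //.
  move=> h; exfalso; move: h; apply/negP; rewrite -ltNge; lra.
have Qpos : 0 < Q by rewrite lt_def Qp Q0.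
have sS : 0 < Num.sqrt S by rewrite sqrtr_gt0.
have sQ : 0 < Num.sqrt Q by rewrite sqrtr_gt0.
have := H (Num.sqrt Q / Num.sqrt S) (divr_gt0 sQ sS).
have -> : Num.sqrt Q / Num.sqrt S * S + Q / (Num.sqrt Q / Num.sqrt S)
   = 2 * (Num.sqrt S * Num.sqrt Q).
  rewrite -{2}(sqr_sqrtr (ltW S0)) -{2}(sqr_sqrtr Q0).
  field; rewrite !gt_eqF //.
move=> h; lra.
Qed.

Section CV.
Context {R : realType} (Fl : set_system R) {FF : Filter Fl}.
Lemma cM (h1 h2 : R -> R) (l1 l2 : R) : h1 c @[c --> Fl] --> l1 -> h2 c @[c --> Fl] --> l2 ->
  (h1 c * h2 c) @[c --> Fl] --> l1 * l2.
Proof. by move=> H1 H2; apply: cvgM. Qed.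
Lemma cD (h1 h2 : R -> R) (l1 l2 : R) : h1 c @[c --> Fl] --> l1 -> h2 c @[c --> Fl] --> l2 ->
  (h1 c + h2 c) @[c --> Fl] --> l1 + l2.
Proof. by move=> H1 H2; apply: cvgD. Qed.
Lemma cB (h1 h2 : R -> R) (l1 l2 : R) : h1 c @[c --> Fl] --> l1 -> h2 c @[c --> Fl] --> l2 ->
  (h1 c - h2 c) @[c --> Fl] --> l1 - l2.
Proof. by move=> H1 H2; apply: cvgB. Qed.
Lemma cC (l : R) : (fun _ : R => l) c @[c --> Fl] --> l.
Proof. exact: cvg_cst. Qed.
Lemma cN (h : R -> R) (l : R) : h c @[c --> Fl] --> l -> `|h c| @[c --> Fl] --> `|l|.
Proof. by move=> H; apply: cvg_norm. Qed.
Lemma cS (h : R -> R) (l : R) : h c @[c --> Fl] --> l ->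
  Num.sqrt (h c) @[c --> Fl] --> Num.sqrt l.
Proof. by move=> H; apply: (cvg_comp _ _ H); apply: sqrt_continuous. Qed.
Lemma cX (h : R -> R) (l : R) n : h c @[c --> Fl] --> l -> (h c ^+ n) @[c --> Fl] --> l ^+ n.
Proof.
move=> H; elim: n => [|n IH]; first by rewrite expr0; under eq_fun do rewrite expr0; apply: cC.
rewrite exprS; under eq_fun do rewrite exprS; exact: cM.
Qed.
End CV.

Section Main.
Context {R : realType} (a b : R) (f : R -> R).
Hypothesis ab : a < b.
Hypothesis fc : {within `[a,b], continuous f}.
Hypothesis df : forall x, x \in `]a,b[ -> derivable f x 1.
Hypothesis dg : forall x, x \in `]a,b[ -> derivable (derive1 f) x 1.
Hypothesis cg2 : {in `]a,b[, continuous (derive1 (derive1 f))}.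
Hypothesis L2 : measurable_fun `[a, b] (derive1 (derive1 f)) /\
  (\int[@lebesgue_measure R]_(t in `[a, b]) (((derive1 (derive1 f)) t) ^+ 2)%:E < +oo)%E.
Hypothesis sym : forall x, x \in `[a,b] -> f (a+b-x) = f x.

Notation mu := (@lebesgue_measure R).
Let g : R -> R := derive1 f.
Let g2 : R -> R := derive1 g.
Let F t := \int[mu]_(u in `[a,t]) f u.
Let G2 t := \int[mu]_(u in `[a,t]) (g2 u ^+ 2).

Let inab t : a < t < b -> t \in `]a,b[.
Proof. by move=> H; rewrite in_itv /=. Qed.

Lemma Df t : a < t < b -> is_derive t 1 f (g t).
Proof. by move=> H; apply: dfun; apply: df; apply: inab. Qed.
Lemma Dg t : a < t < b -> is_derive t 1 g (g2 t).
Proof. by move=> H; apply: dfun; apply: dg; apply: inab. Qed.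
Lemma Cg2 t : a < t < b -> {for t, continuous g2}.
Proof. by move=> H; apply: cg2; apply: inab. Qed.

Lemma intf : mu.-integrable `[a,b] (EFin \o f).
Proof. by apply: continuous_compact_integrable => //; exact: segment_compact. Qed.

Lemma intg2 : mu.-integrable `[a,b] (EFin \o (fun u => g2 u ^+ 2)).
Proof.
apply/integrableP; split.
  by apply/measurable_realfun.measurable_EFinP; apply: measurable_realfun.measurable_funX; case: L2.
case: L2 => _ H; apply: le_lt_trans H; rewrite le_eqVlt; apply/orP; left.
apply/eqP; apply: eq_integral => u _ /=.
by rewrite ger0_norm // sqr_ge0.
Qed.

Lemma DF t : a < t < b -> is_derive t 1 F (f t).
Proof.
move=> /andP[ha hb].
have cf : {for t, continuous f} by apply: (@dcont _ _ _ (g t)); apply: Df; apply/andP.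
have [H1 H2] := @continuous_FTC1_closed R f a t b hb intf ha cf.
by apply: dmk.
Qed.

Lemma DG2 t : a < t < b -> is_derive t 1 G2 (g2 t ^+ 2).
Proof.
move=> /andP[ha hb].
have cf : {for t, continuous (fun u => g2 u ^+ 2)}.
  by have := continuousM (Cg2 (t:=t) (introT andP (conj ha hb))) (Cg2 (introT andP (conj ha hb))).
have [H1 H2] := @continuous_FTC1_closed R _ a t b hb intg2 ha cf.
by apply: dmk.
Qed.

Definition Bf (k z u : R) :=
  ((- k) * sin (k * (u - z))) * (g u * g u) * (cos (k * (u - z)))^-1.
Definition Psi (e z k tau sg u : R) :=
  (2 * sg * ((u - e) * f u - F u) - tau / 3 * ((u - e) * ((u - e) * (u - e))))
     + Bf k z u * (tau * k ^+ 2)^-1.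

Lemma piece (p q e z k tau sg : R) : a < p -> p <= q -> q < b -> 0 < k -> 0 < tau ->
  sg ^+ 2 = 1 ->
  (forall t, p <= t <= q -> 0 < cos (k * (t - z))) ->
  Psi e z k tau sg q - Psi e z k tau sg p <= (G2 q - G2 p) * (tau * k ^+ 2)^-1.
Proof.
move=> ap pq qb k0 tau0 sg2 cpos.
set c := (tau * k ^+ 2)^-1.
rewrite /Psi -/c.
pose Lam u := G2 u * c - ((2 * sg * ((u - e) * f u - F u) - tau / 3 * ((u - e) * ((u - e) * (u - e))))
     + (((- k) * sin (k * (u - z))) * (g u * g u) * (cos (k * (u - z)))^-1) * c).
have key : forall t, p <= t <= q -> derivable Lam t 1 /\ 0 <= derive1 Lam t.
  move=> t /andP[pt tq].
  have tab : a < t < b by rewrite (lt_le_trans ap pt) (le_lt_trans tq qb).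
  have xe := dB (dId t) (dC e t).
  have kz := dM (dC k t) (dB (dId t) (dC z t)).
  have sD := dComp (dsin _) kz.
  have cD := dComp (dcos _) kz.
  have cne : cos (k * (t - z)) != 0 by rewrite gt_eqF // cpos // pt tq.
  have iD := dV cne cD.
  have ggD := dM (Dg tab) (Dg tab).
  have BD := dM (dM (dM (dC (- k) t) sD) ggD) iD.
  have H := dB (dM (DG2 tab) (dC c t))
    (dD (dB (dM (dC (2 * sg) t) (dB (dM xe (Df tab)) (DF tab)))
            (dM (dC (tau / 3) t) (dM xe (dM xe xe))))
        (dM BD (dC c t))).
  split; first by case: H.
  have -> : derive1 Lam t = _ := dval H.
  rewrite /=.
  set cs := cos _. set sn := sin _.
  set G := g t. set Hh := g2 t. set X := t - e.
  have csn : cs != 0 by [].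
  set E := (X in 0 <= X).
  have -> : E = ((Hh*cs + k*sn*G)^+2/cs^+2 + k^+2*(tau*X - sg*G)^+2 + k^+2*G^+2*(1 - sg^+2)) * c.
    rewrite /E /c; field.
    by rewrite csn /= gt_eqF // gt_eqF.
  rewrite sg2 subrr mulr0 addr0; apply: mulr_ge0; last first.
    by rewrite /c invr_ge0 mulr_ge0 // ?ltW // exprn_gt0.
  apply: addr_ge0; last by apply: mulr_ge0; apply: sqr_ge0.
  by apply: mulr_ge0; rewrite ?sqr_ge0 // invr_ge0 sqr_ge0.
have mono := @ger0_derive1_ndecr R Lam p q.
have : Lam p <= Lam q.
  apply: mono => //.
  - by move=> x; rewrite in_itv /= => /andP[px xq]; case: (key x (introT andP (conj (ltW px) (ltW xq)))).
  - by move=> x; rewrite in_itv /= => /andP[px xq]; case: (key x (introT andP (conj (ltW px) (ltW xq)))).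
  - apply: (@derivable_within_continuous R R Lam `[p, q]) => x.
    by rewrite in_itv /= => /andP[px xq]; case: (key x (introT andP (conj px xq))).
rewrite /Lam /Bf => H; rewrite -subr_ge0; rewrite -subr_ge0 in H.
apply: (le_trans H); rewrite le_eqVlt; apply/orP; left; apply/eqP; ring.
Qed.

Lemma gm0 : g ((a + b) / 2) = 0.
Proof.
set m := (a + b) / 2.
have mab : a < m < b by rewrite /m (midf_lt ab).1 (midf_lt ab).2.
have em : a + b - m = m by rewrite /m; field.
have mab' : a < a + b - m < b by rewrite em.
have h1 := @dComp R f (fun u => a + b - u) m _ _ (Df mab') (dB (dC (a + b) m) (dId m)).
have h2 : is_derive m 1 f (g (a + b - m) * (0 - 1)).
  apply: (near_eq_is_derive _ h1).
  have := @near_in_itvoo R a b m (inab mab).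
  apply: filterS => u; rewrite in_itv /= => /andP[au ub] /=.
  by apply: sym; rewrite in_itv /=; apply/andP; split; apply: ltW.
have e1 := dval h2.
have e2 := dval (Df mab).
rewrite em in e1.
have : g m = - g m by rewrite -{1}e2 e1; ring.
move=> H; lra.
Qed.

Lemma cos_pos (w : R) : - ((b - a) / 2) < w < (b - a) / 2 -> 0 < cos (pi / (b - a) * w).
Proof.
move=> /andP[h1 h2]; apply: cos_gt0_pihalf.
have ba : 0 < b - a by rewrite subr_gt0.
have p0 : 0 < pi :> R := pi_gt0 R.
set K := pi / (b - a).
have K0 : 0 < K by rewrite /K divr_gt0.
have KE : pi = K * (b - a) by rewrite /K divfK // gt_eqF.
rewrite KE; apply/andP; split; nra.
Qed.

Lemma Bfzz k z : Bf k z z = 0.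
Proof. by rewrite /Bf subrr mulr0 sin0 mulr0 !mul0r. Qed.

Lemma Bfm k z : Bf k z ((a + b) / 2) = 0.
Proof. by rewrite /Bf gm0 !mul0r !mulr0 mul0r. Qed.

Lemma perc (c y tau sg : R) : a < c -> c <= y -> y <= (a + b) / 2 -> 0 < tau -> sg ^+ 2 = 1 ->
  2 * sg * ((a + b - c - c) * f y - (F (a + b - c) - F c))
   - tau * (2 * ((y - c) ^+ 3 + ((a + b) / 2 - y) ^+ 3) / 3)
  <= (G2 (a + b - c) - G2 c) * (tau * (pi / (b - a)) ^+ 2)^-1.
Proof.
move=> ac cy ym tau0 sg2.
set m := (a + b) / 2.
set k := pi / (b - a).
set d := a + b - c.
set yb := a + b - y.
have ba : 0 < b - a by rewrite subr_gt0.
have k0 : 0 < k by rewrite /k divr_gt0 // pi_gt0.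
have mE : m = (a + b) / 2 by [].
have db : d < b by rewrite /d; lra.
have cm : c <= m by apply: le_trans ym.
have ybm : m <= yb by rewrite /yb mE; lra.
have ybd : yb <= d by rewrite /yb /d; lra.
have ac' : a < m by apply: lt_le_trans cm.
have am : a < yb by apply: lt_le_trans ybm.
have P1 := @piece c y c c k tau sg ac cy (le_lt_trans (le_trans ym ybm) (le_lt_trans ybd db)) k0 tau0 sg2.
have P2 := @piece y m m c k tau sg (lt_le_trans ac cy) ym (le_lt_trans ybm (le_lt_trans ybd db)) k0 tau0 sg2.
have P3 := @piece m yb m d k tau sg ac' ybm (le_lt_trans ybd db) k0 tau0 sg2.
have P4 := @piece yb d d d k tau sg am ybd db k0 tau0 sg2.
have C1 : forall t, c <= t <= m -> 0 < cos (k * (t - c)).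
  move=> t /andP[h1 h2]; apply: cos_pos; apply/andP; split; rewrite mE in h2; lra.
have C2 : forall t, m <= t <= d -> 0 < cos (k * (t - d)).
  move=> t /andP[h1 h2]; apply: cos_pos; apply/andP; split; rewrite mE /d in h1 h2 *; lra.
have {}P1 := P1 (fun t h => C1 t (let: conj u v := andP h in introT andP (conj u (le_trans v ym)))).
have {}P2 := P2 (fun t h => C1 t (let: conj u v := andP h in introT andP (conj (le_trans cy u) v))).
have {}P3 := P3 (fun t h => C2 t (let: conj u v := andP h in introT andP (conj u (le_trans v ybd)))).
have {}P4 := P4 (fun t h => C2 t (let: conj u v := andP h in introT andP (conj (le_trans ybm u) v))).
have fyb : f yb = f y.
  rewrite /yb; apply: sym; rewrite in_itv /=; apply/andP; split.
    exact: ltW (lt_le_trans ac cy).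
  apply: le_trans ym _; rewrite ?mE; lra.
have S := lerD (lerD (lerD P1 P2) P3) P4.
rewrite /Psi Bfzz !Bfm Bfzz fyb in S.
move: S; set L := (X in X <= _); set Rr := (X in _ <= X) => S.
set T1 := (X in X <= _); set T2 := (X in _ <= X).
have -> : T1 = L by rewrite /T1 /L /yb /d /m; field; rewrite !gt_eqF.
have -> : T2 = Rr by rewrite /T2 /Rr; ring.
exact: S.
Qed.


Lemma int_le s t : a <= s -> s <= t -> t <= b ->
  (\int[mu]_(u in `[a, s]) (g2 u ^+ 2)%:E <= \int[mu]_(u in `[a, t]) (g2 u ^+ 2)%:E)%E.
Proof.
move=> hs st tb.
have sub : `[a, t] `<=` `[a, b] by apply: subset_itvl; rewrite bnd_simp.
apply: ge0_subset_integral => //.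
- apply: (measurable_funS _ sub) => //.
  by apply/measurable_realfun.measurable_EFinP; apply: measurable_realfun.measurable_funX; case: L2.
- by move=> u _; rewrite lee_fin sqr_ge0.
- by apply: subset_itvl; rewrite bnd_simp.
Qed.

Lemma int_fin t : a <= t -> t <= b ->
  (\int[mu]_(u in `[a, t]) (g2 u ^+ 2)%:E)%E \is a fin_num.
Proof.
move=> ht tb; rewrite ge0_fin_numE; last by apply: integral_ge0 => u _; rewrite lee_fin sqr_ge0.
apply: le_lt_trans (int_le ht tb (lexx b)) _.
by case: L2.
Qed.

Lemma G2le s t : a <= s -> s <= t -> t <= b -> G2 s <= G2 t.
Proof.
move=> hs st tb; rewrite /G2 /Rintegral.
apply: fine_le; [exact: int_fin (le_trans st tb)|exact: int_fin (le_trans hs st) tb|].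
exact: int_le.
Qed.

Lemma G2ge0 t : 0 <= G2 t.
Proof. by apply: Rintegral_ge0 => u _; apply: sqr_ge0. Qed.

Lemma perc2 (c y : R) : a < c -> c < (a + b) / 2 -> c <= y -> y <= (a + b) / 2 ->
  `|(a + b - c - c) * f y - (F (a + b - c) - F c)| <=
   Num.sqrt (2 * ((y - c) ^+ 3 + ((a + b) / 2 - y) ^+ 3) / 3) *
   (Num.sqrt (G2 b) / (pi / (b - a))).
Proof.
move=> ac cm cy ym.
set m := (a + b) / 2 in cm ym *.
have mE : m = (a + b) / 2 by [].
set k := pi / (b - a).
set I := (a + b - c - c) * f y - (F (a + b - c) - F c).
set S := 2 * ((y - c) ^+ 3 + (m - y) ^+ 3) / 3.
have ba : 0 < b - a by rewrite subr_gt0.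
have k0 : 0 < k by rewrite /k divr_gt0 // pi_gt0.
have S0 : 0 < S.
  rewrite /S; apply: divr_gt0 => //; apply: mulr_gt0 => //.
  have u0 : 0 <= y - c by rewrite subr_ge0.
  have v0 : 0 <= m - y by rewrite subr_ge0.
  have uv : 0 < (y - c) + (m - y) by rewrite addrC addrA subrK subr_gt0.
  move: u0 v0 uv; set u := y - c; set v := m - y => u0 v0 uv.
  have -> : u ^+ 3 + v ^+ 3 = (u + v) * (((u - v) ^+ 2 + (u ^+ 2 + v ^+ 2)) / 2).
    by field.
  apply: mulr_gt0 => //; apply: divr_gt0 => //.
  have h1 : 0 < u ^+ 2 + v ^+ 2.
    have -> : u ^+ 2 + v ^+ 2 = ((u + v) ^+ 2 + (u - v) ^+ 2) / 2 by field.
    apply: divr_gt0 => //; apply: (lt_le_trans (exprn_gt0 2 uv)).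
    by rewrite lerDl; apply: sqr_ge0.
  have h3 := sqr_ge0 (u - v).
  by apply: lt_le_trans h1 _; rewrite lerDr.
have G0 : 0 <= G2 b by apply: G2ge0.
set Q := (Num.sqrt (G2 b) / k) ^+ 2.
have Q0 : 0 <= Q by apply: sqr_ge0.
have sQ : Num.sqrt Q = Num.sqrt (G2 b) / k.
  by rewrite /Q sqrtr_sqr ger0_norm // divr_ge0 ?sqrtr_ge0 // ltW.
rewrite -sQ; apply: cs_lemma => // tau tau0.
have db : a + b - c <= b by lra.
have GG : (G2 (a + b - c) - G2 c) * (tau * k ^+ 2)^-1 <= Q / tau.
  have -> : Q / tau = G2 b * (tau * k ^+ 2)^-1.
    rewrite /Q expr_div_n sqr_sqrtr //; field; rewrite !gt_eqF //.
  apply: ler_wpM2r; first by rewrite invr_ge0; apply: mulr_ge0; [exact: ltW | exact: ltW (exprn_gt0 2 k0)].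
  have adc : a <= a + b - c by rewrite mE in cm; lra.
  have := G2ge0 c; have := @G2le (a + b - c) b adc db (lexx b).
  move=> h1 h2; lra.
have P1 := @perc c y tau 1 ac cy ym tau0 (expr1n _ _).
have sgm : (-1 : R) ^+ 2 = 1 by rewrite sqrrN expr1n.
have P2 := @perc c y tau (-1) ac cy ym tau0 sgm.
rewrite -/m -/k -/I -/S in P1 P2.
have [I0|I0] := leP 0 I.
  rewrite ger0_norm //; move: P1 GG; set X := (G2 _ - _) * _; set T := tau * S.
  set Z := Q / tau; lra.
rewrite ltr0_norm //; move: P2 GG; set X := (G2 _ - _) * _; set T := tau * S.
set Z := Q / tau; lra.
Qed.

Lemma lim_step (y : R -> R) (x : R) :
 (\forall c \near a^'+, c <= y c <= (a + b) / 2) ->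
 y c @[c --> a^'+] --> x -> f (y c) @[c --> a^'+] --> f x ->
 `|(b - a) * f x - F b| <= Num.sqrt (2 * ((x - a) ^+ 3 + ((a + b) / 2 - x) ^+ 3) / 3) *
   (Num.sqrt (G2 b) / (pi / (b - a))).
Proof.
move=> Hyb Hy Hfy.
have cF := parameterized_integral_continuous (ltW ab) intf.
have [_ Fa Fb] := (continuous_within_itvP _ ab).1 cF.
have F0 : F a = 0 by rewrite /F set_itv1 Rintegral_set1.
have cI : (fun c : R => c) c @[c --> a^'+] --> a := cvg_at_right_filter cvg_id.
have Fd : F (a + b - c) @[c --> a^'+] --> F b.
  have H := @decreasing_cvg_at_right_comp R (fun c => a + b - c) F a (BLeft b) (F b).
  apply: H.
  - by rewrite bnd_simp.
  - by move=> u v _ _ uv; rewrite ltrD2l ltrN2.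
  - exact: (cB (cC (l:=a + b)) cI).
  - by rewrite (_ : a + b - a = b); [exact: Fb | ring].
pose proof (cN (cB (cM (cB (cB (cC (l:=a + b)) cI) cI) Hfy) (cB Fd Fa))) as hL.
pose proof (cM (cS (cM (cM (cC (l:=2)) (cD (cX (n:=3) (cB Hy cI)) (cX (n:=3) (cB (cC (l:=(a + b) / 2)) Hy))))
   (cC (l:=3^-1)))) (cC (l:=Num.sqrt (G2 b) / (pi / (b - a))))) as hU.
have -> : (b - a) * f x - F b = (a + b - a - a) * f x - (F b - F a).
  by rewrite F0; ring.
apply: (ler_cvg_to hL hU).
have mab : a < (a + b) / 2 by rewrite (midf_lt ab).1.
near=> c.
apply: perc2.
- by near: c; apply: nbhs_right_gt.
- by near: c; apply: nbhs_right_lt.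
- by near: c; apply: filterS Hyb => u /andP[].
- by near: c; apply: filterS Hyb => u /andP[].
Unshelve. all: by end_near.
Qed.

Lemma final x : x \in `[a, (a + b) / 2] ->
    `| f x - (b - a)^-1 * F b | <=
      Num.sqrt (b - a) / pi *
      Num.sqrt ((b - a) ^+ 2 / 48 + (x - (3 * a + b) / 4) ^+ 2) *
      Num.sqrt (G2 b).
Proof.
rewrite in_itv /= => /andP[ax xm].
have ba : 0 < b - a by rewrite subr_gt0.
have p0 : 0 < pi :> R := pi_gt0 R.
have mab : a < (a + b) / 2 by rewrite (midf_lt ab).1.
have H : `|(b - a) * f x - F b| <= Num.sqrt (2 * ((x - a) ^+ 3 + ((a + b) / 2 - x) ^+ 3) / 3) *
   (Num.sqrt (G2 b) / (pi / (b - a))).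
  have [ax'|xa] := ltP a x.
    apply: (@lim_step (fun _ => x)).
    - near=> c; apply/andP; split => //.
      by apply: ltW; near: c; apply: nbhs_right_lt.
    - exact: cvg_cst.
    - exact: cvg_cst.
  have xe : x = a by apply/eqP; rewrite eq_le xa ax.
  rewrite xe; apply: (@lim_step (fun c => c)).
  - near=> c; apply/andP; split => //.
    by apply: ltW; near: c; apply: nbhs_right_lt.
  - exact: cvg_at_right_filter cvg_id.
  - by have [_ fa _] := (continuous_within_itvP _ ab).1 fc.
have E1 : f x - (b - a)^-1 * F b = ((b - a) * f x - F b) / (b - a).
  by field; rewrite gt_eqF.
rewrite E1 normrM normfV (gtr0_norm ba).
have E2 : Num.sqrt (b - a) / pi *
      Num.sqrt ((b - a) ^+ 2 / 48 + (x - (3 * a + b) / 4) ^+ 2) * Num.sqrt (G2 b) =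
   Num.sqrt (2 * ((x - a) ^+ 3 + ((a + b) / 2 - x) ^+ 3) / 3) *
   (Num.sqrt (G2 b) / (pi / (b - a))) / (b - a).
  have -> : 2 * ((x - a) ^+ 3 + ((a + b) / 2 - x) ^+ 3) / 3 =
     (b - a) * ((b - a) ^+ 2 / 48 + (x - (3 * a + b) / 4) ^+ 2) by field.
  rewrite sqrtrM ?ltW //; move: p0; generalize (pi : R) => P P0; field; rewrite !gt_eqF //.
rewrite E2; apply: ler_wpM2r => //; rewrite invr_ge0 ltW //.
Unshelve. all: by end_near.
Qed.

End Main.

Theorem corollary2p8 (R : realType) (a b : R) (f : R -> R) :
  a < b ->
  {within `[a, b], continuous f} ->
  (forall x, x \in `]a, b[ -> derivable f x 1) ->
  (forall x, x \in `]a, b[ -> derivable (derive1 f) x 1) ->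
  {in `]a, b[, continuous (derive1n 2 f)} ->
  L2_on a b (derive1n 2 f) ->
  (forall x, x \in `[a, b] -> f (a + b - x) = f x) ->
  forall x, x \in `[a, (a + b) / 2] ->
    `| f x - mean_on a b f | <=
      Num.sqrt (b - a) / pi *
      Num.sqrt ((b - a) ^+ 2 / 48 + (x - (3 * a + b) / 4) ^+ 2) *
      L2norm a b (derive1n 2 f).
Proof.
move=> ab fc df dg cg2 L2 sym x xin.
exact: (@final R a b f ab fc df dg cg2 L2 sym x xin).
Qed.
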